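(* Let $f:\mathbb{R}^N\to[0,\infty]$ be a symmetric function and define $F:\mathbb{H}_N\to[0,\infty]$ by $F(X)=f(\lambda(X))$. Let $\gamma>0$. Then $$\mathcal{Q}_\gamma(F)=\mathcal{Q}_\gamma(f)\circ\lambda .$$ Moreover, for every $\rho>\gamma$ and every $X\in\mathbb{H}_N$, $$\operatorname{prox}_{\mathcal{Q}_\gamma(F)/\rho}(X)=U\,\operatorname{diag}\!\big(\operatorname{prox}_{\mathcal{Q}_\gamma(f)/\rho}(\lambda(X))\big)\,U^*,$$ where $X=U\operatorname{diag}(\lambda(X))U^*$ is any spectral decomposition of $X$ with $U$ unitary.
   Context: $\mathbb{H}_N$ denotes the real vector space of $N\times N$ complex Hermitian matrices with the Frobenius inner product $\langle X,Y\rangle_F$ and norm $\|\cdot\|_F$; $\mathbb{R}^N$ carries the Euclidean norm. For $X\in\mathbb{H}_N$, $\lambda(X)\in\mathbb{R}^N$ is the vector of eigenvalues of $X$ ordered non-increasingly. A function $f:\mathbb{R}^N\to[0,\infty]$ is symmetric if $f(\Pi x)=f(x)$ for every permutation matrix $\Pi$ and every $x$. For a function $g$ on a real Hilbert space $\mathcal{H}$ and $\gamma>0$, the quadratic envelope is $$\mathcal{Q}_\gamma(g)(x)=\sup_{\alpha\in\mathbb{R},\,y\in\mathcal{H}}\Big\{\alpha-\tfrac{\gamma}{2}\|x-y\|^2:\ \alpha-\tfrac{\gamma}{2}\|\cdot-y\|^2\le g\Big\}.$$ For a function $h$ on $\mathcal{H}$ and $\rho>0$, $\operatorname{prox}_{h/\rho}(w)=\operatorname{argmin}_{v\in\mathcal{H}}\big(h(v)/\rho+\tfrac12\|v-w\|^2\big)$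 (for $\rho>\gamma$ and $h=\mathcal{Q}_\gamma(\cdot)$ this is single-valued). *)

(* Defs.v *)
From Stdlib Require Import Reals Classical ClassicalEpsilon.
From mathcomp Require Import ssreflect ssrfun ssrbool eqtype ssrnat seq fintype.
From mathcomp Require Import fingroup perm.
Set Implicit Arguments. Unset Strict Implicit.
Local Open Scope R_scope.

Inductive ERbar := Fin (r : R) | PInf | MInf.

Definition ERle (a b : ERbar) : Prop :=
  match a, b with
  | MInf, _ => True
  | _, PInf => True
  | Fin x, Fin y => x <= y
  | _, _ => False
  end.

Definition ERdiv_add (h : ERbar) (c t : R) : ERbar :=
  match h with Fin r => Fin (r / c + t) | PInf => PInf | MInf => MInf end.

Definition ERsup (E : R -> Prop) : ERbar :=
  match excluded_middle_informative (exists l, is_lub E l) with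
  | left H => Fin (proj1_sig (constructive_indefinite_description _ H))
  | right _ =>
      match excluded_middle_informative (exists x, E x) with
      | left _ => PInf
      | right _ => MInf
      end
  end.

(* ---------- quadratic envelope and prox on a (sub)space ----------
   dom : the ambient real Hilbert space as a predicate on a carrier type,
   d2 x y : squared norm ||x - y||^2. *)
Definition Qenv (T : Type) (dom : T -> Prop) (d2 : T -> T -> R)
  (gamma : R) (g : T -> ERbar) (x : T) : ERbar :=
  ERsup (fun t => exists (alpha : R) (y : T),
     dom y /\
     (forall z, dom z -> ERle (Fin (alpha - gamma / 2 * d2 z y)) (g z)) /\
     t = alpha - gamma / 2 * d2 x y).

Definition is_prox (T : Type) (dom : T -> Prop) (d2 : T -> T -> R)
  (h : T -> ERbar) (rho : R) (w v : T) : Prop :=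
  dom v /\ forall u, dom u ->
    ERle (ERdiv_add (h v) rho (/ 2 * d2 v w)) (ERdiv_add (h u) rho (/ 2 * d2 u w)).

Definition sumI (N : nat) (F : 'I_N -> R) : R :=
  foldr Rplus 0 (map F (enum 'I_N)).

Definition vecR (N : nat) := 'I_N -> R.
Definition vdist2 (N : nat) (x y : vecR N) : R :=
  sumI (fun i => (x i - y i) * (x i - y i)).

Record C := mkC { Cre : R; Cim : R }.
Definition C0 : C := mkC 0 0.
Definition C1 : C := mkC 1 0.
Definition RtoC (r : R) : C := mkC r 0.
Definition Cadd (a b : C) : C := mkC (Cre a + Cre b) (Cim a + Cim b).
Definition Csub (a b : C) : C := mkC (Cre a - Cre b) (Cim a - Cim b).
Definition Cmul (a b : C) : C :=
  mkC (Cre a * Cre b - Cim a * Cim b) (Cre a * Cim b + Cim a * Cre b).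
Definition Cconj (a : C) : C := mkC (Cre a) (- Cim a).
Definition Cnorm2 (a : C) : R := Cre a * Cre a + Cim a * Cim a.
Definition csumI (N : nat) (F : 'I_N -> C) : C :=
  foldr Cadd C0 (map F (enum 'I_N)).

Definition mat (N : nat) := 'I_N -> 'I_N -> C.
Definition mmul (N : nat) (A B : mat N) : mat N :=
  fun i j => csumI (fun k => Cmul (A i k) (B k j)).
Definition adj (N : nat) (A : mat N) : mat N := fun i j => Cconj (A j i).
Definition idm (N : nat) : mat N := fun i j => if i == j then C1 else C0.
Definition diagm (N : nat) (l : vecR N) : mat N :=
  fun i j => if i == j then RtoC (l i) else C0.
Definition hermitian (N : nat) (X : mat N) : Prop := forall i j, X j i = Cconj (X i j).
Definition unitary (N : nat) (U : mat N) : Prop :=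
  mmul U (adj U) = @idm N /\ mmul (adj U) U = @idm N.
Definition fdist2 (N : nat) (X Y : mat N) : R :=
  sumI (fun i => sumI (fun j => Cnorm2 (Csub (X i j) (Y i j)))).

Definition nonincreasing (N : nat) (l : vecR N) : Prop :=
  forall i j : 'I_N, (i <= j)%N -> l j <= l i.
Definition is_eigvals (N : nat) (X : mat N) (l : vecR N) : Prop :=
  nonincreasing l /\ exists U, unitary U /\ X = mmul (mmul U (diagm l)) (adj U).
Definition lambda (N : nat) (X : mat N) : vecR N :=
  match excluded_middle_informative (exists l, is_eigvals X l) with
  | left H => proj1_sig (constructive_indefinite_description _ H)
  | right _ => fun _ => 0
  end.

Definition Qvec (N : nat) := @Qenv (vecR N) (fun _ => True) (@vdist2 N).
Definition Qmat (N : nat) := @Qenv (mat N) (@hermitian N) (@fdist2 N).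
Definition prox_vec (N : nat) := @is_prox (vecR N) (fun _ => True) (@vdist2 N).
Definition prox_mat (N : nat) := @is_prox (mat N) (@hermitian N) (@fdist2 N).

(* Main.v *)
Require Import Defs.
From Stdlib Require Import Reals FunctionalExtensionality Lra Classical ClassicalEpsilon.
From mathcomp Require Import all_boot all_order all_algebra.
From mathcomp Require Import Rstruct.
From mathcomp Require Import fingroup perm complex spectral sesquilinear.
From mathcomp Require lra ring.
Require Import Defs.
Module PartA.
Import mathcomp.algebra_tactics.lra.
Import Order.TTheory GRing.Theory Num.Theory Num.Def.
Local Open Scope ring_scope.
Notation RR := Rdefinitions.R.

Section DS.
Variable N : nat.
Definition noninc (a : 'I_N -> RR) := forall i j : 'I_N, (i <= j)%N -> a j <= a i.

Lemma abel (a d : 'I_N -> RR) : noninc a ->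
  (forall k, \sum_(i < N | (i < k)%N) d i <= 0) ->
  forall k, (k <= N)%N -> forall m, (forall i : 'I_N, (i < k)%N -> m <= a i) ->
  \sum_(i < N | (i < k)%N) a i * d i <= m * \sum_(i < N | (i < k)%N) d i.
Proof.
move=> ha hP; elim=> [|k IH] hk m hm.
  by rewrite !big_pred0 // ?mulr0.
have kN : (k < N)%N by [].
set K := Ordinal kN.
have split (F : 'I_N -> RR) : \sum_(i < N | (i < k.+1)%N) F i =
   F K + \sum_(i < N | (i < k)%N) F i.
  rewrite (bigD1 K) //=; congr (_ + _); apply: eq_bigl => i.
  rewrite -val_eqE /= ltnS; case: (ltngtP i k) => h.
  - by [].
  - by [].
  - by [].
rewrite !split.
have h1 := IH (ltnW hk) (a K) (fun i hi => ha i K (ltnW hi)).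
have hmK : m <= a K by apply: hm => /=.
have hP1 := hP k.+1; rewrite split in hP1.
apply: (le_trans (lerD (lexx _) h1)).
rewrite -mulrDr.
by rewrite ler_wnM2r.
Qed.

Lemma topk (b : 'I_N -> RR) (S : 'I_N -> 'I_N -> RR) k : noninc b ->
  (forall i j, 0 <= S i j) -> (forall j, \sum_i S i j = 1) ->
  (forall i, \sum_j S i j = 1) ->
  \sum_(i < N | (i < k)%N) (\sum_j b j * S i j - b i) <= 0.
Proof.
move=> hb S0 Sc Sr.
set c := fun j => \sum_(i < N | (i < k)%N) S i j.
have c0 j : 0 <= c j by apply: sumr_ge0.
have c1 j : c j <= 1.
  rewrite -(Sc j) /c [X in _ <= X](bigID (fun i : 'I_N => (i < k)%N)) /= lerDl.
  by apply: sumr_ge0.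
set m := if (k < N)%N =P true is ReflectT hk then b (Ordinal hk) else - \sum_i `|b i|.
have hm1 (j : 'I_N) : (j < k)%N -> m <= b j.
  rewrite /m; case: eqP => [hk|hk] hj.
    by apply: hb => /=; rewrite ltnW.
  rewrite lerNl (bigD1 j) //= -normrN ler_wpDr ?ler_norm //.
  by apply: sumr_ge0.
have hm2 (j : 'I_N) : (k <= j)%N -> b j <= m.
  rewrite /m; case: eqP => [hk|hk] hj; first by apply: hb.
  by exfalso; apply: hk; apply: leq_ltn_trans hj _.
have E : \sum_(i < N | (i < k)%N) (\sum_j b j * S i j - b i) =
   \sum_j b j * (c j - ((j < k)%N)%:R).
  rewrite sumrB exchange_big /=.
  rewrite [X in _ - X](big_mkcond) /= -sumrB.
  apply: eq_bigr => j _; rewrite mulrBr mulr_sumr; congr (_ - _).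
  by case: (j < k)%N; rewrite ?mulr1 ?mulr0.
rewrite E.
apply: (@le_trans _ _ (\sum_j m * (c j - ((j < k)%N)%:R))).
  apply: ler_sum => j _.
  case: (ltnP j k) => hj /=.
    have := hm1 j hj; have := c1 j; rewrite /= mulr1n; nra.
  have := hm2 j hj; have := c0 j; rewrite /= mulr0n; nra.
rewrite -mulr_sumr sumrB.
suff -> : \sum_(j < N) c j = \sum_(j < N) ((j < k)%N)%:R :> RR by rewrite subrr mulr0.
rewrite /c exchange_big /= big_mkcond /=.
by apply: eq_bigr => i _; case: (i < k)%N; rewrite ?Sr.
Qed.

Lemma ds_ineq (a b : 'I_N -> RR) (S : 'I_N -> 'I_N -> RR) : noninc a -> noninc b ->
  (forall i j, 0 <= S i j) -> (forall j, \sum_i S i j = 1) ->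
  (forall i, \sum_j S i j = 1) ->
  \sum_i \sum_j a i * b j * S i j <= \sum_i a i * b i.
Proof.
move=> ha hb S0 Sc Sr.
rewrite -subr_le0.
set d := fun i => \sum_j b j * S i j - b i.
have -> : \sum_i \sum_j a i * b j * S i j - \sum_i a i * b i = \sum_i a i * d i.
  rewrite -sumrB; apply: eq_bigr => i _.
  by rewrite /d mulrBr mulr_sumr; congr (_ - _); apply: eq_bigr => j _; rewrite mulrA.
have hP k : \sum_(i < N | (i < k)%N) d i <= 0 by apply: topk.
have hall (F : 'I_N -> RR) : \sum_(i < N | (i < N)%N) F i = \sum_i F i.
  by apply: eq_bigl => i; rewrite ltn_ord.
have := @abel a d ha hP N (leqnn N) (- \sum_i `|a i|).
have -> : \sum_(i < N | (i < N)%N) d i = 0.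
  rewrite hall /d sumrB exchange_big /=.
  rewrite (eq_bigr (fun j => b j)) ?subrr // => j _.
  by rewrite -mulr_sumr Sc mulr1.
rewrite mulr0 hall; apply => i _.
rewrite lerNl (bigD1 i) //= -normrN ler_wpDr ?ler_norm //.
by apply: sumr_ge0.
Qed.
End DS.

End PartA.
Import PartA.
Module PartB.
Import mathcomp.algebra_tactics.lra mathcomp.algebra_tactics.ring.
Import Order.TTheory GRing.Theory Num.Theory Num.Def.
Local Open Scope ring_scope.
Local Delimit Scope ring_scope with ring.

Arguments noninc {N} a.
Definition CC := RR[i].
Notation rc := (real_complex RR).

Lemma rcD x y : rc (x + y) = rc x + rc y. Proof. exact: rmorphD. Qed.
Lemma rcM x y : rc (x * y) = rc x * rc y. Proof. exact: rmorphM. Qed.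
Lemma rcB x y : rc (x - y) = rc x - rc y. Proof. exact: rmorphB. Qed.
Lemma rc_sum I (r : seq I) (P : pred I) (F : I -> RR) :
  rc (\sum_(i <- r | P i) F i) = \sum_(i <- r | P i) rc (F i).
Proof. exact: rmorph_sum. Qed.
Lemma rcK x : complex.Re (rc x) = x. Proof. by []. Qed.
Lemma rc_inj x y : rc x = rc y -> x = y. Proof. by move/(congr1 (@complex.Re RR)). Qed.
Lemma conj_rc x : Num.conj (rc x) = rc x.
Proof. by apply/eqP; rewrite eq_complex /= oppr0 !eqxx. Qed.
Definition nrm2 (z : CC) : RR := (complex.Re z * complex.Re z + complex.Im z * complex.Im z)%ring.
Lemma mul_conj z : z * Num.conj z = rc (nrm2 z).
Proof.
case: z => a b; apply/eqP; rewrite eq_complex /nrm2 /=; apply/andP; split; apply/eqP.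
  by rewrite mulrN opprK.
by rewrite mulrN mulrC addNr.
Qed.
Lemma conj_mul_self z : Num.conj z * z = rc (nrm2 z).
Proof. by rewrite mulrC mul_conj. Qed.
Lemma nrm2_ge0 z : 0 <= nrm2 z.
Proof. by rewrite /nrm2 addr_ge0 // -expr2 sqr_ge0. Qed.

Section Mx.
Variable N : nat.
Notation M := 'M[CC]_N.
Definition adjM (A : M) : M := \matrix_(i, j) Num.conj (A j i).
Definition dgM (a : 'I_N -> RR) : M := diag_mx (\row_i rc (a i)).
Definition unitM (U : M) := U *m adjM U = 1%:M /\ adjM U *m U = 1%:M.
Definition frob (A : M) : RR := (\sum_i \sum_j nrm2 (A i j))%ring.

Lemma adjM_mul (A B : M) : adjM (A *m B) = adjM B *m adjM A.
Proof.
apply/matrixP => i j; rewrite !mxE rmorph_sum; apply: eq_bigr => k _.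
by rewrite !mxE rmorphM mulrC.
Qed.
Lemma adjMK (A : M) : adjM (adjM A) = A.
Proof. by apply/matrixP => i j; rewrite !mxE conjCK. Qed.
Lemma adjMB (A B : M) : adjM (A - B) = adjM A - adjM B.
Proof. by apply/matrixP => i j; rewrite !mxE rmorphB. Qed.
Lemma adjM_dg a : adjM (dgM a) = dgM a.
Proof.
apply/matrixP => i j; rewrite !mxE eq_sym; case: eqP => [->|_].
  by rewrite !mulr1n conj_rc.
by rewrite !mulr0n rmorph0.
Qed.
Lemma adjM1 : adjM 1%:M = 1%:M.
Proof.
apply/matrixP => i j; rewrite !mxE eq_sym.
by case: (i == j); rewrite ?mulr1n ?mulr0n ?rmorph1 ?rmorph0.
Qed.

Lemma frobC (A : M) : rc (frob A) = \tr (A *m adjM A).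
Proof.
rewrite /frob rc_sum /mxtrace; apply: eq_bigr => i _.
rewrite rc_sum !mxE; apply: eq_bigr => j _.
by rewrite !mxE mul_conj.
Qed.

Lemma tr_dg_mul a (Q : M) : \tr (dgM a *m Q) = \sum_i rc (a i) * Q i i.
Proof. by rewrite mul_diag_mx /mxtrace; apply: eq_bigr => i _; rewrite !mxE. Qed.

Lemma sandwich_ii (P : M) b i :
  (P *m dgM b *m adjM P) i i = \sum_j rc (b j * nrm2 (P i j)).
Proof.
rewrite mxE; apply: eq_bigr => j _.
by rewrite mul_mx_diag !mxE mulrAC mul_conj rcM mulrC.
Qed.

Definition Smx (P : M) i j := nrm2 (P i j).

Lemma S_rows (P : M) : P *m adjM P = 1%:M -> forall i, \sum_j Smx P i j = 1.
Proof.
move=> h i; apply: rc_inj; rewrite rc_sum rmorph1.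
have := congr1 (fun A : M => A i i) h; rewrite !mxE eqxx mulr1n => <-.
by apply: eq_bigr => j _; rewrite !mxE mul_conj.
Qed.
Lemma S_cols (P : M) : adjM P *m P = 1%:M -> forall j, \sum_i Smx P i j = 1.
Proof.
move=> h j; apply: rc_inj; rewrite rc_sum rmorph1.
have := congr1 (fun A : M => A j j) h; rewrite !mxE eqxx mulr1n => <-.
by apply: eq_bigr => i _; rewrite !mxE conj_mul_self.
Qed.

Definition sq (a : 'I_N -> RR) : RR := (\sum_i a i * a i)%ring.

Lemma frob_identity U W a b : unitM U -> unitM W ->
  frob (U *m dgM a *m adjM U - W *m dgM b *m adjM W) =
  sq a + sq b - 2 * \sum_i \sum_j a i * b j * Smx (adjM U *m W) i j.
Proof.
move=> [U1 U2] [W1 W2].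
set X := U *m dgM a *m adjM U; set Y := W *m dgM b *m adjM W.
have hX : adjM X = X by rewrite /X !adjM_mul adjMK adjM_dg mulmxA.
have hY : adjM Y = Y by rewrite /Y !adjM_mul adjMK adjM_dg mulmxA.
apply: rc_inj; rewrite frobC adjMB hX hY.
rewrite mulmxBl !mulmxBr !raddfB /=.
have sqX c (V : M) : adjM V *m V = 1%:M ->
    \tr ((V *m dgM c *m adjM V) *m (V *m dgM c *m adjM V)) = rc (sq c).
  move=> hV; rewrite !mulmxA -(mulmxA (V *m dgM c) (adjM V) V) hV mulmx1.
  rewrite mxtrace_mulC !mulmxA hV mul1mx.
  rewrite tr_dg_mul /sq rc_sum; apply: eq_bigr => i _.
  by rewrite !mxE eqxx !mulr1n rcM.
rewrite /X /Y !sqX //.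
have hXY : \tr (X *m Y) = rc (\sum_i \sum_j a i * b j * Smx (adjM U *m W) i j).
  rewrite /X /Y -!mulmxA mxtrace_mulC.
  set P := adjM U *m W.
  have -> : dgM a *m (adjM U *m (W *m (dgM b *m adjM W))) *m U
     = dgM a *m (P *m dgM b *m adjM P) by rewrite /P adjM_mul adjMK !mulmxA.
  rewrite tr_dg_mul rc_sum; apply: eq_bigr => i _.
  rewrite sandwich_ii rc_sum mulr_sumr; apply: eq_bigr => j _.
  by rewrite -!rcM mulrA.
have hYX : \tr (Y *m X) = \tr (X *m Y) by rewrite mxtrace_mulC.
rewrite /X /Y in hXY hYX; rewrite hYX hXY.
rewrite rmorphD rmorphM rmorph_nat.
ring.
Qed.

Definition vd (a b : 'I_N -> RR) : RR := (\sum_i (a i - b i) * (a i - b i))%ring.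

Lemma vd_expand a b : vd a b = sq a + sq b - 2 * \sum_i a i * b i.
Proof.
rewrite /vd /sq -big_split /= mulr_sumr -sumrB; apply: eq_bigr => i _; ring.
Qed.

Lemma HW U W (a b : 'I_N -> RR) : unitM U -> unitM W -> noninc a -> noninc b ->
  vd a b <= frob (U *m dgM a *m adjM U - W *m dgM b *m adjM W).
Proof.
move=> hU hW ha hb; rewrite frob_identity // vd_expand.
rewrite lerD2l lerN2 ler_pM2l ?ltr0n //.
case: hU => U1 U2; case: hW => W1 W2.
apply: ds_ineq => //.
- by move=> i j; apply: nrm2_ge0.
- apply: S_cols; rewrite adjM_mul adjMK mulmxA -(mulmxA _ U) U1 mulmx1 W2 //.
- apply: S_rows; rewrite adjM_mul adjMK mulmxA -(mulmxA _ W) W1 mulmx1 U2 //.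
Qed.

Lemma frob_same U a b : unitM U ->
  frob (U *m dgM a *m adjM U - U *m dgM b *m adjM U) = vd a b.
Proof.
move=> hU; rewrite frob_identity // vd_expand; case: hU => _ ->.
congr (_ - 2 * _); apply: eq_bigr => i _.
rewrite (bigD1 i) //= big1 ?addr0.
  by rewrite /Smx /nrm2 mxE eqxx /= mulr1 mul0r addr0 mulr1.
move=> j hj; rewrite /Smx /nrm2 mxE eq_sym (negPf hj) /= mul0r addr0 mulr0 //.
Qed.
End Mx.

End PartB.
Import PartB.
Module PartC.
Import mathcomp.algebra_tactics.lra mathcomp.algebra_tactics.ring.
Import Order.TTheory GRing.Theory Num.Theory Num.Def.
Local Open Scope ring_scope.
Local Delimit Scope ring_scope with ring.

Arguments unitM {N} U.
Arguments adjM {N} A.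
Arguments dgM {N} a.
Arguments frob {N} A.
Arguments vd {N} a b.
Arguments sq {N} a.
Arguments Smx {N} P i j.
Section C.
Variable N : nat.
Notation M := 'M[CC]_N.

Lemma sort_perm (a : 'I_N -> RR) : exists s : {perm 'I_N}, noninc (fun i => a (s i)).
Proof.
set t := [tuple a i | i < N].
have hp : perm_eq (sort (fun x y : RR => y <= x) t) t by rewrite perm_sort.
case/tuple_permP: hp => p hp; exists p => i j hij.
have hs : sorted (fun x y : RR => y <= x) (sort (fun x y : RR => y <= x) t).
  by apply: sort_sorted => x y; exact: le_total.
have hn (k : 'I_N) : nth 0 (sort (fun x y : RR => y <= x) t) k = a (p k).
  by rewrite hp /= (nth_map k) ?size_enum_ord // nth_ord_enum tnth_mktuple.
rewrite -!hn.
apply: (@sorted_leq_nth _ (fun x y : RR => y <= x)) => //;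
  rewrite ?inE ?size_sort ?size_tuple ?ltn_ord //.
by move=> x y z h1 h2; apply: le_trans h2 h1.
Qed.

Definition pmx (s : {perm 'I_N}) : M := \matrix_(i, j) ((s j == i)%:R).

Lemma sum_delta (i : 'I_N) (G : 'I_N -> CC) : \sum_k ((k == i)%:R * G k) = G i.
Proof.
rewrite (bigD1 i) //= eqxx mul1r big1 ?addr0 // => k /negPf ->; by rewrite mul0r.
Qed.

Lemma sum_perm_delta (s : {perm 'I_N}) (i : 'I_N) (G : 'I_N -> CC) :
  \sum_k ((s k == i)%:R * G k) = G (s^-1 i)%g.
Proof.
rewrite (reindex_inj (@perm_inj _ (s^-1)%g)) /=.
by under eq_bigr => k _ do rewrite permKV; rewrite sum_delta.
Qed.

Lemma pmx_unit s : unitM (pmx s).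
Proof.
split; apply/matrixP => i j; rewrite !mxE.
- under eq_bigr => k _ do rewrite !mxE rmorph_nat.
  rewrite sum_perm_delta permKV eq_sym.
  by case: (i == j).
- under eq_bigr => k _ do rewrite !mxE rmorph_nat mulrC.
  under eq_bigr => k _ do rewrite [s j == k]eq_sym.
  by rewrite sum_delta (inj_eq perm_inj).
Qed.

Lemma pmx_dg s (a : 'I_N -> RR) :
  pmx s *m dgM (fun i => a (s i)) *m adjM (pmx s) = dgM a.
Proof.
apply/matrixP => i j; rewrite !mxE.
under eq_bigr => k _ do rewrite mul_mx_diag !mxE rmorph_nat -mulrA.
rewrite sum_perm_delta permKV.
by rewrite mulr_natr.
Qed.

Lemma resort (a : 'I_N -> RR) : exists s : {perm 'I_N},
  noninc (fun i => a (s i)) /\ forall U : M, unitM U -> exists U' : M, unitM U' /\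
    U *m dgM a *m adjM U = U' *m dgM (fun i => a (s i)) *m adjM U'.
Proof.
case: (sort_perm a) => s hs; exists s; split => // U [U1 U2].
exists (U *m pmx s); split.
  case: (pmx_unit s) => P1 P2; split.
    by rewrite adjM_mul mulmxA -(mulmxA U) P1 mulmx1 U1.
  by rewrite adjM_mul mulmxA -(mulmxA _ (adjM U)) U2 mulmx1 P2.
by rewrite adjM_mul -!mulmxA (mulmxA (pmx s)) (mulmxA (pmx s *m _)) pmx_dg !mulmxA.
Qed.

Local Open Scope sesquilinear_scope.
Lemma tstar_adj (X : M) : X ^t* = adjM X.
Proof. by apply/matrixP => i j; rewrite !mxE. Qed.

Lemma conj_fixed (z : CC) : Num.conj z = z -> z = rc (complex.Re z).
Proof.
case: z => x y /= h; have : - y = y by move: h => [].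
move=> hy; have y0 : y = 0 by lra.
by rewrite y0.
Qed.

Lemma spectral (X : M) : adjM X = X ->
  exists (U : M) (a : 'I_N -> RR), unitM U /\ noninc a /\ X = U *m dgM a *m adjM U.
Proof.
move=> hX.
have hn : X \is normalmx by rewrite qualifE tstar_adj hX.
case/orthomx_spectral_subproof: hn => [[P D]] /= /unitarymxP hP hXe.
rewrite invmx_unitary in hXe; last by apply/unitarymxP.
rewrite tstar_adj in hP hXe.
have hP' : adjM P *m P = 1%:M by apply: mulmx1C.
set U := adjM P.
have hU : unitM U by rewrite /unitM /U adjMK.
have hDr : forall i, D 0 i = rc (complex.Re (D 0 i)).
  move=> i; apply: conj_fixed.
  have : adjM (diag_mx D) = diag_mx D.
    have := hX; rewrite hXe !adjM_mul adjMK !mulmxA => h.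
    have := congr1 (fun Y => P *m Y *m adjM P) h.
    rewrite !mulmxA hP mul1mx -!mulmxA hP mulmx1.
    by rewrite mul1mx mulmx1.
  move/matrixP/(_ i i); rewrite !mxE eqxx !mulr1n.
  by [].
set a0 := fun i => complex.Re (D 0 i).
have hD : diag_mx D = dgM a0.
  apply/matrixP => i j; rewrite !mxE; by rewrite [in LHS]hDr.
case: (resort a0) => s [hs hres].
case: (hres U hU) => U' [hU' he].
exists U', (fun i => a0 (s i)); split => //; split => //.
by rewrite -he hXe hD /U adjMK.
Qed.
End C.

End PartC.
Import PartC.
Module PartD.
Import mathcomp.algebra_tactics.lra mathcomp.algebra_tactics.ring.
Import Order.TTheory GRing.Theory Num.Theory Num.Def.
Local Open Scope ring_scope.
Local Delimit Scope ring_scope with ring.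
Arguments unitM {N} U.
Arguments adjM {N} A.
Arguments dgM {N} a.
Arguments frob {N} A.
Arguments vd {N} a b.

Section D.
Variable N : nat.
Notation M := 'M[CC]_N.

Definition toCC (a : C) : CC := Complex (Cre a) (Cim a).
Definition toM (A : mat N) : M := \matrix_(i, j) toCC (A i j).
Definition ofM (B : M) : mat N := fun i j => mkC (complex.Re (B i j)) (complex.Im (B i j)).

Lemma toM_ofM B : toM (ofM B) = B.
Proof. by apply/matrixP => i j; rewrite !mxE /toCC /ofM /=; case: (B i j). Qed.
Lemma ofM_toM A : ofM (toM A) = A.
Proof.
apply: functional_extensionality => i; apply: functional_extensionality => j.
by rewrite /ofM !mxE /=; case: (A i j).
Qed.
Lemma toM_inj A B : toM A = toM B -> A = B.
Proof. by move=> h; rewrite -(ofM_toM A) h ofM_toM. Qed.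

Lemma foldr_big (T : Type) (r : seq T) (F : T -> RR) :
  foldr Rplus 0%R (map F r) = \sum_(i <- r) F i.
Proof. by elim: r => [|x r IH]; rewrite ?big_nil ?big_cons //= IH. Qed.

Lemma sumIE (F : 'I_N -> RR) : sumI F = \sum_i F i.
Proof. by rewrite /sumI foldr_big enumT. Qed.

Lemma foldrC_big (T : Type) (r : seq T) (F : T -> C) :
  toCC (foldr Cadd C0 (map F r)) = \sum_(i <- r) toCC (F i).
Proof.
elim: r => [|x r IH] /=; first by rewrite big_nil.
by rewrite big_cons -IH.
Qed.

Lemma csumIE (F : 'I_N -> C) : toCC (csumI F) = \sum_i toCC (F i).
Proof. by rewrite /csumI foldrC_big enumT. Qed.

Lemma toCC_mul a b : toCC (Cmul a b) = toCC a * toCC b. Proof. by []. Qed.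
Lemma toCC_conj a : toCC (Cconj a) = Num.conj (toCC a). Proof. by []. Qed.

Lemma toM_mmul A B : toM (mmul A B) = toM A *m toM B.
Proof.
apply/matrixP => i j; rewrite !mxE /mmul csumIE; apply: eq_bigr => k _.
by rewrite toCC_mul !mxE.
Qed.
Lemma toM_adj A : toM (adj A) = adjM (toM A).
Proof. by apply/matrixP => i j; rewrite !mxE. Qed.
Lemma toM_diag l : toM (diagm l) = dgM l.
Proof.
apply/matrixP => i j; rewrite !mxE /diagm; case: (i == j) => //=.
Qed.
Lemma toM_idm : toM (@idm N) = 1%:M.
Proof. apply/matrixP => i j; rewrite !mxE /idm; case: (i == j) => //=. Qed.

Lemma unitaryE U : unitary U <-> unitM (toM U).
Proof.
rewrite /unitary /unitM -toM_adj -!toM_mmul -toM_idm; split.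
  by case=> -> ->.
by case=> /toM_inj -> /toM_inj ->.
Qed.

Lemma hermitianE X : hermitian X <-> adjM (toM X) = toM X.
Proof.
split.
  move=> h; apply/matrixP => i j; rewrite !mxE h /toCC /Cconj /=.
  by apply/eqP; rewrite eq_complex /= opprK !eqxx.
move=> /matrixP h i j; have := h i j; rewrite !mxE => e.
have e' : toCC (X j i) = toCC (Cconj (X i j)) by rewrite toCC_conj -e conjCK.
by move: e'; case: (X j i) => ? ?; case: (Cconj (X i j)) => ? ? [-> ->].
Qed.

Lemma fdist2E X Y : fdist2 X Y = frob (toM X - toM Y).
Proof.
rewrite /fdist2 /frob sumIE; apply: eq_bigr => i _.
rewrite sumIE; apply: eq_bigr => j _.
by rewrite !mxE.
Qed.

Lemma vdist2E (a b : vecR N) : vdist2 a b = vd a b.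
Proof. by rewrite /vdist2 sumIE. Qed.

Lemma nonincE (a : vecR N) : nonincreasing a <-> noninc a.
Proof.
split=> h i j hij; have := h i j hij; by move/RleP.
Qed.
End D.

End PartD.
Import PartD.
Module PartE.

Import Order.TTheory GRing.Theory Num.Theory Num.Def.
Arguments unitM {N} U.
Arguments adjM {N} A.
Arguments dgM {N} a.
Arguments frob {N} A.
Arguments vd {N} a b.
Arguments toM {N} A.
Arguments ofM {N} B.
Local Open Scope R_scope.

Section E.
Variable N : nat.

Definition conjd (U : mat N) (a : vecR N) : mat N := mmul (mmul U (diagm a)) (adj U).

Lemma toM_conjd U a : toM (conjd U a) = (toM U *m dgM a *m adjM (toM U))%R.
Proof. by rewrite /conjd !toM_mmul toM_adj toM_diag. Qed.

Lemma L1 (X : mat N) : hermitian X -> exists l, is_eigvals X l.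
Proof.
move=> /hermitianE h.
case: (@spectral N _ h) => U' [a [hU [ha he]]].
exists a; split; first by apply/nonincE.
exists (ofM U'); split; first by apply/unitaryE; rewrite toM_ofM.
by apply: toM_inj; rewrite -/(conjd _ _) toM_conjd toM_ofM.
Qed.

Lemma L2 U W a b : unitary U -> unitary W -> nonincreasing a -> nonincreasing b ->
  vdist2 a b <= fdist2 (conjd U a) (conjd W b).
Proof.
move=> /unitaryE hU /unitaryE hW /nonincE ha /nonincE hb.
apply/RleP; rewrite vdist2E fdist2E !toM_conjd.
exact: HW.
Qed.

Lemma L3 U a b : unitary U -> fdist2 (conjd U a) (conjd U b) = vdist2 a b.
Proof.
move=> /unitaryE hU; rewrite vdist2E fdist2E !toM_conjd.
exact: frob_same.
Qed.

Lemma L4 U a : hermitian (conjd U a).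
Proof.
apply/hermitianE; rewrite toM_conjd !adjM_mul adjMK adjM_dg.
by rewrite mulmxA.
Qed.

Lemma L5 (a : vecR N) : exists s : {perm 'I_N},
  nonincreasing (fun i => a (s i)) /\ forall U, unitary U ->
    exists U', unitary U' /\ conjd U a = conjd U' (fun i => a (s i)).
Proof.
case: (@resort N a) => s [hs hr]; exists s; split; first by apply/nonincE.
move=> U /unitaryE hU; case: (hr _ hU) => U' [hU' he].
exists (ofM U'); split; first by apply/unitaryE; rewrite toM_ofM.
by apply: toM_inj; rewrite !toM_conjd toM_ofM.
Qed.

Lemma vdist2_ge0 (a b : vecR N) : 0 <= vdist2 a b.
Proof.
apply/RleP; rewrite vdist2E; apply: sumr_ge0 => i _.
by rewrite -expr2 sqr_ge0.
Qed.

Lemma fdist2_ge0 (X Y : mat N) : 0 <= fdist2 X Y.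
Proof.
apply/RleP; rewrite fdist2E; apply: sumr_ge0 => i _; apply: sumr_ge0 => j _.
exact: nrm2_ge0.
Qed.

Lemma vdist2_eq0 (a b : vecR N) : vdist2 a b <= 0 -> a = b.
Proof.
move=> h; have h0 : vdist2 a b = 0 by have := vdist2_ge0 a b; lra.
move: h0; rewrite vdist2E /vd => /eqP; rewrite psumr_eq0; last first.
  by move=> i _; rewrite -expr2 sqr_ge0.
move=> /allP hall; apply: functional_extensionality => i.
have := hall i (mem_index_enum i); rewrite implyTb mulf_eq0 orbb subr_eq0.
by move/eqP.
Qed.

Lemma nrm2_eq0 z : nrm2 z = 0%R -> z = 0%R.
Proof.
case: z => x y; rewrite /nrm2 /= => /eqP.
rewrite paddr_eq0 ?mulf_eq0 ?orbb; try by rewrite -expr2 sqr_ge0.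
by case/andP => /eqP -> /eqP ->.
Qed.

Lemma fdist2_eq0 (X Y : mat N) : fdist2 X Y <= 0 -> X = Y.
Proof.
move=> h; have h0 : fdist2 X Y = 0 by have := fdist2_ge0 X Y; lra.
move: h0; rewrite fdist2E /frob => /eqP; rewrite psumr_eq0; last first.
  by move=> i _; apply: sumr_ge0 => j _; exact: nrm2_ge0.
move=> /allP hall; apply: toM_inj; apply/matrixP => i j.
have := hall i (mem_index_enum i); rewrite implyTb psumr_eq0; last first.
  by move=> k _; exact: nrm2_ge0.
move=> /allP /(_ j (mem_index_enum j)); rewrite implyTb => /eqP /nrm2_eq0.
by rewrite !mxE => /eqP; rewrite subr_eq0 => /eqP.
Qed.

Lemma fdist2_self (X : mat N) : fdist2 X X = 0.
Proof.
rewrite fdist2E subrr /frob big1 // => i _; rewrite big1 // => j _.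
by rewrite mxE /nrm2 /= mulr0 addr0.
Qed.

Lemma vdist2_perm (s : {perm 'I_N}) (x y : vecR N) :
  vdist2 (fun i => x (s i)) (fun i => y (s i)) = vdist2 x y.
Proof.
by rewrite !vdist2E /vd [RHS](reindex_inj (@perm_inj _ s)).
Qed.

Lemma D1 (X : mat N) : hermitian X -> is_eigvals X (lambda X).
Proof.
move=> hX; rewrite /lambda.
destruct (excluded_middle_informative (exists l, is_eigvals X l)) as [H|H].
  by case: (constructive_indefinite_description _ H).
by exfalso; apply: H; exact: L1.
Qed.

Lemma D2 (X : mat N) a b : is_eigvals X a -> is_eigvals X b -> a = b.
Proof.
move=> [ha [U [hU eU]]] [hb [W [hW eW]]].
apply: vdist2_eq0.
have := L2 U W a b hU hW ha hb; rewrite /conjd -eU -eW fdist2_self.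
by [].
Qed.

Lemma D3 (W : mat N) (z : vecR N) : unitary W ->
  exists s : {perm 'I_N}, lambda (conjd W z) = (fun i => z (s i)).
Proof.
move=> hW; case: (L5 z) => s [hs hr]; exists s.
case: (hr W hW) => W' [hW' e].
apply: (@D2 (conjd W z)); first by apply: D1; apply: L4.
split => //; exists W'; split => //.
Qed.
End E.

End PartE.
Import PartE.
Module PartF.

Local Open Scope R_scope.
Set Implicit Arguments. Unset Strict Implicit.

Definition cof (E1 E2 : R -> Prop) := forall t, E1 t -> exists t', E2 t' /\ t <= t'.

Lemma ub_cof E1 E2 : cof E1 E2 -> forall u, is_upper_bound E2 u -> is_upper_bound E1 u.
Proof.
move=> h u hu t ht; case: (h t ht) => t' [h1 h2]; move: (hu t' h1); lra.
Qed.

Lemma lub_cof E1 E2 l : cof E1 E2 -> cof E2 E1 -> is_lub E1 l -> is_lub E2 l.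
Proof.
move=> h12 h21 [h1 h2]; split.
  exact: ub_cof h21 _ h1.
move=> b hb; apply: h2; exact: ub_cof h12 _ hb.
Qed.

Lemma ERsup_eq E1 E2 : cof E1 E2 -> cof E2 E1 -> ERsup E1 = ERsup E2.
Proof.
move=> h12 h21; rewrite /ERsup.
destruct (excluded_middle_informative (exists l, is_lub E1 l)) as [H1|H1];
destruct (excluded_middle_informative (exists l, is_lub E2 l)) as [H2|H2].
- case: (constructive_indefinite_description _ H1) => l1 hl1.
  case: (constructive_indefinite_description _ H2) => l2 hl2 /=.
  have hl1' := lub_cof h12 h21 hl1.
  case: hl1' => a1 b1; case: hl2 => a2 b2.
  have := b1 _ a2; have := b2 _ a1; move=> x y; f_equal; lra.
- exfalso; apply: H2; case: H1 => l hl; exists l; exact: lub_cof h12 h21 hl.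
- exfalso; apply: H1; case: H2 => l hl; exists l; exact: lub_cof h21 h12 hl.
- destruct (excluded_middle_informative (exists x, E1 x)) as [e1|e1];
  destruct (excluded_middle_informative (exists x, E2 x)) as [e2|e2] => //.
  + exfalso; apply: e2; case: e1 => x hx; case: (h12 x hx) => t [ht _]; by exists t.
  + exfalso; apply: e1; case: e2 => x hx; case: (h21 x hx) => t [ht _]; by exists t.
Qed.

Lemma ERsup_Fin E q : ERsup E = Fin q -> is_lub E q.
Proof.
rewrite /ERsup.
destruct (excluded_middle_informative (exists l, is_lub E l)) as [H|H].
  by case: (constructive_indefinite_description _ H) => l hl /= [<-].
by destruct (excluded_middle_informative (exists x, E x)).
Qed.

Lemma ERsup_fin E : (exists x, E x) -> bound E -> exists q, ERsup E = Fin q.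
Proof.
move=> ne hb; rewrite /ERsup.
destruct (excluded_middle_informative (exists l, is_lub E l)) as [H|H].
  by case: (constructive_indefinite_description _ H) => l hl /=; exists l.
exfalso; apply: H; case: (completeness E hb ne) => l hl; by exists l.
Qed.

Lemma ERsup_notMInf E : (exists x, E x) -> ERsup E <> MInf.
Proof.
move=> ne; rewrite /ERsup.
destruct (excluded_middle_informative (exists l, is_lub E l)) as [H|H].
  by case: (constructive_indefinite_description _ H).
by destruct (excluded_middle_informative (exists x, E x)).
Qed.

Lemma ERsup_bound E : (exists x, E x) -> ERsup E <> PInf -> bound E.
Proof.
move=> ne hP; apply: NNPP => hb; apply: hP; rewrite /ERsup.
destruct (excluded_middle_informative (exists l, is_lub E l)) as [H|H].
  exfalso; case: H => l [hl _]; apply: hb; by exists l.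
by destruct (excluded_middle_informative (exists x, E x)).
Qed.

Lemma ERle_trans a b c : ERle a b -> ERle b c -> ERle a c.
Proof. by case: a; case: b; case: c => //= *; lra. Qed.

Lemma ERle_refl a : ERle a a.
Proof. by case: a => //= *; lra. Qed.

Lemma ERdiv_add_mono h rho t1 t2 : t1 <= t2 ->
  ERle (ERdiv_add h rho t1) (ERdiv_add h rho t2).
Proof. by case: h => //= r ht; lra. Qed.

Section Gen.
Variables (T : Type) (dom : T -> Prop) (d2 : T -> T -> R) (gamma : R) (g : T -> ERbar).
Hypothesis gamma_pos : 0 < gamma.
Hypothesis d2_ge0 : forall x y, 0 <= d2 x y.
Hypothesis g_ge0 : forall z, ERle (Fin 0) (g z).

Definition QS (x : T) (t : R) := exists (alpha : R) (y : T),
     dom y /\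
     (forall z, dom z -> ERle (Fin (alpha - gamma / 2 * d2 z y)) (g z)) /\
     t = alpha - gamma / 2 * d2 x y.

Lemma QenvE x : Qenv dom d2 gamma g x = ERsup (QS x).
Proof. by []. Qed.

Lemma QS_ne y0 : dom y0 -> forall x, exists t, QS x t.
Proof.
move=> hy x; exists (0 - gamma / 2 * d2 x y0), 0, y0; split => //; split => //.
move=> z hz; apply: ERle_trans (g_ge0 z) => /=.
have := d2_ge0 z y0; have : 0 < gamma / 2 by lra.
move=> h1 h2; have := Rmult_le_pos _ _ (Rlt_le _ _ h1) h2; lra.
Qed.

Lemma QS_le_g x r : dom x -> g x = Fin r -> forall t, QS x t -> t <= r.
Proof.
move=> hx hg t [a [y [_ [hm ->]]]]; have := hm x hx; by rewrite hg.
Qed.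

Variable mid : T -> T -> T.
Hypothesis mid_dom : forall x x', dom x -> dom x' -> dom (mid x x').
Hypothesis par : forall x x' y, d2 (mid x x') y = / 2 * d2 x y + / 2 * d2 x' y - / 4 * d2 x x'.

Lemma QS_mid x1 x2 q1 q2 : is_lub (QS x1) q1 -> is_lub (QS x2) q2 ->
  forall t, QS (mid x1 x2) t -> t <= / 2 * q1 + / 2 * q2 + gamma / 8 * d2 x1 x2.
Proof.
move=> [u1 _] [u2 _] t [a [y [hy [hm ->]]]].
have h1 := u1 (a - gamma / 2 * d2 x1 y) (ex_intro _ a (ex_intro _ y (conj hy (conj hm erefl)))).
have h2 := u2 (a - gamma / 2 * d2 x2 y) (ex_intro _ a (ex_intro _ y (conj hy (conj hm erefl)))).
rewrite par; lra.
Qed.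

Lemma prox_unique rho w v1 v2 y0 u :
  gamma < rho -> dom y0 -> dom u -> g u <> PInf ->
  is_prox dom d2 (Qenv dom d2 gamma g) rho w v1 ->
  is_prox dom d2 (Qenv dom d2 gamma g) rho w v2 -> d2 v1 v2 <= 0.
Proof.
move=> hrho hy0 hu hgu [hv1 p1] [hv2 p2].
have ne := QS_ne hy0.
have [r hr] : exists r, g u = Fin r.
  move: (g_ge0 u) hgu; case: (g u) => //= r; by exists r.
have [qu hqu] : exists q, Qenv dom d2 gamma g u = Fin q.
  apply: ERsup_fin; first exact: ne.
  by exists r; move=> t ht; exact: QS_le_g hu hr t ht.
have fin : forall v, is_prox dom d2 (Qenv dom d2 gamma g) rho w v ->
    exists q, Qenv dom d2 gamma g v = Fin q.
  move=> v [hv pv]; have := pv u hu; rewrite hqu.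
  have := ERsup_notMInf (ne v); rewrite -QenvE.
  case: (Qenv dom d2 gamma g v) => //= q _ _; by exists q.
case: (fin _ (conj hv1 p1)) => q1 e1.
case: (fin _ (conj hv2 p2)) => q2 e2.
have l1 := ERsup_Fin e1; have l2 := ERsup_Fin e2.
have [qm em] : exists q, Qenv dom d2 gamma g (mid v1 v2) = Fin q.
  apply: ERsup_fin; first exact: ne.
  exists (/ 2 * q1 + / 2 * q2 + gamma / 8 * d2 v1 v2).
  exact: QS_mid l1 l2.
have lm := ERsup_Fin em.
have hqm : qm <= / 2 * q1 + / 2 * q2 + gamma / 8 * d2 v1 v2.
  case: lm => _; apply => t ht; exact: QS_mid l1 l2 t ht.
have i1 := p1 _ (mid_dom hv1 hv2); have i2 := p2 _ (mid_dom hv1 hv2).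
rewrite e1 em /= in i1; rewrite e2 em /= in i2.
rewrite par in i1 i2.
have hr0 : 0 < rho by lra.
set D := d2 v1 v2 in hqm i1 i2 *.
have hD := d2_ge0 v1 v2; rewrite -/D in hD.
move: i1 i2; rewrite /Rdiv => i1 i2.
set k := / rho in i1 i2.
have hk : 0 < k by apply: Rinv_0_lt_compat.
have hgr : gamma * k < 1.
  rewrite /k; apply: (Rmult_lt_reg_r rho) => //.
  rewrite Rmult_assoc Rinv_l; lra.
have A : qm * k <= (/ 2 * q1 + / 2 * q2 + gamma * / 8 * D) * k.
  by apply: Rmult_le_compat_r; lra.
apply: Rnot_lt_le => hD0.
have B : 0 < (1 - gamma * k) * D by apply: Rmult_lt_0_compat; lra.
nra.
Qed.
End Gen.

End PartF.
Import PartF.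
Module PartG.

Local Open Scope R_scope.
Arguments conjd {N} U a. Arguments L2 {N} U W a b. Arguments L3 {N} U a b.
Arguments L4 {N} U a. Arguments L5 {N} a. Arguments D1 {N X}. Arguments D2 {N} X a b.
Arguments D3 {N} W z. Arguments vdist2_perm {N} s x y.
Arguments vdist2_eq0 {N} a b. Arguments fdist2_eq0 {N} X Y.
Arguments vdist2_ge0 {N} a b. Arguments fdist2_ge0 {N} X Y.

Section Main.
Variable N : nat.

Lemma unitary_idm : unitary (@idm N).
Proof.
apply/unitaryE; rewrite toM_idm /unitM adjM1.
by rewrite matrix.mulmx1.
Qed.

Definition mid (V V' : mat N) : mat N := fun i j =>
  mkC ((Cre (V i j) + Cre (V' i j)) / 2) ((Cim (V i j) + Cim (V' i j)) / 2).

Lemma mid_herm V V' : hermitian V -> hermitian V' -> hermitian (mid V V').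
Proof.
move=> h h' i j; rewrite /mid h h' /Cconj /=; f_equal; field.
Qed.

Lemma foldr_lin (T : Type) (r : seq T) (F G H : T -> R) a b c :
  foldr Rplus 0 (map (fun i => a * F i + b * G i - c * H i) r) =
  a * foldr Rplus 0 (map F r) + b * foldr Rplus 0 (map G r) - c * foldr Rplus 0 (map H r).
Proof. elim: r => [|x r IH] /=; [ring | rewrite IH; ring]. Qed.

Lemma sumI_lin (F G H : 'I_N -> R) a b c :
  sumI (fun i => a * F i + b * G i - c * H i) = a * sumI F + b * sumI G - c * sumI H.
Proof. exact: foldr_lin. Qed.

Lemma fdist2_mid x x' y :
  fdist2 (mid x x') y = / 2 * fdist2 x y + / 2 * fdist2 x' y - / 4 * fdist2 x x'.
Proof.
rewrite /fdist2 -sumI_lin.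
f_equal; apply: functional_extensionality => i.
rewrite -sumI_lin; f_equal; apply: functional_extensionality => j.
rewrite /mid /Cnorm2 /Csub /=; field.
Qed.

Variables (f : vecR N -> ERbar) (gamma : R).
Hypothesis f_nonneg : forall x, ERle (Fin 0) (f x).
Hypothesis f_sym : forall (s : {perm 'I_N}) (x : vecR N), f (fun i => x (s i)) = f x.
Hypothesis gamma_pos : 0 < gamma.

Let F : mat N -> ERbar := fun X => f (lambda X).

Lemma FD3 W z : unitary W -> F (conjd W z) = f z.
Proof.
move=> hW; rewrite /F; case: (D3 _ z hW) => s ->; exact: f_sym.
Qed.

Lemma vperm_inv (s : {perm 'I_N}) (z y : vecR N) :
  vdist2 z (fun i => y (s i)) = vdist2 (fun i => z ((s^-1)%g i)) y.
Proof.
rewrite -(vdist2_perm s (fun i => z ((s^-1)%g i)) y).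
f_equal; apply: functional_extensionality => i; by rewrite permK.
Qed.

Lemma minor_perm alpha y :
  (forall z, ERle (Fin (alpha - gamma / 2 * vdist2 z y)) (f z)) ->
  forall (s : {perm 'I_N}) z, ERle (Fin (alpha - gamma / 2 * vdist2 z (fun i => y (s i)))) (f z).
Proof.
move=> hm s z; rewrite vperm_inv -(f_sym (s^-1)%g z); exact: hm.
Qed.

Lemma scale_le a b c : a <= b -> c - gamma / 2 * b <= c - gamma / 2 * a.
Proof. move=> h; have : 0 < gamma / 2 by lra. nra. Qed.

Definition QSv (x : vecR N) (t : R) : Prop := exists (alpha : R) (y : vecR N), True /\
     (forall z : vecR N, True -> ERle (Fin (alpha - gamma / 2 * vdist2 z y)) (f z)) /\
     t = alpha - gamma / 2 * vdist2 x y.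

Lemma Qvec_cof (s : {perm 'I_N}) (x : vecR N) :
  cof (QSv (fun i => x (s i))) (QSv x).
Proof.
move=> t [a [y [_ [hm ->]]]].
exists (a - gamma / 2 * vdist2 (fun i => x (s i)) y); split; last by lra.
exists a, (fun i => y ((s^-1)%g i)); split => //; split.
  move=> z _; exact: (minor_perm a y (fun z => hm z I) (s^-1)%g z).
by rewrite vperm_inv invgK.
Qed.

Lemma Qvec_sym (s : {perm 'I_N}) x : Qvec gamma f (fun i => x (s i)) = Qvec gamma f x.
Proof.
rewrite /Qvec /Qenv; apply: ERsup_eq; first exact: (Qvec_cof s x).
have e : x = (fun i => (fun j => x (s j)) ((s^-1)%g i)).
  by apply: functional_extensionality => i; rewrite permKV.
rewrite {1}e; exact: (Qvec_cof (s^-1)%g (fun j => x (s j))).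
Qed.

Lemma part1 X : hermitian X -> Qmat gamma F X = Qvec gamma f (lambda X).
Proof.
move=> hX; rewrite /Qmat /Qvec /Qenv; apply: ERsup_eq.
- move=> t [a [Y [hY [hm ->]]]].
  case: (D1 hY) => hmu [W [hW eY]].
  set mu := lambda Y in hmu eY.
  case: (D1 hX) => hl [U [hU eX]].
  set l := lambda X in hl eX *.
  exists (a - gamma / 2 * vdist2 l mu); split.
    exists a, mu; split => //; split => // z _.
    have := hm _ (L4 W z); rewrite (FD3 W z hW) eY -/(conjd W mu) (L3 W z mu hW).
    by [].
  apply: scale_le.
  have := L2 U W l mu hU hW hl hmu.
  by rewrite /conjd -eX -eY.
- move=> t [a [y [_ [hm ->]]]].
  case: (L5 y) => s [hs hr].
  set y' := fun i => y (s i) in hs hr.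
  case: (D1 hX) => hl [U [hU eX]].
  set l := lambda X in hl eX *.
  have hre : vdist2 l y' <= vdist2 l y.
    case: (hr _ unitary_idm) => W' [hW' e'].
    have := L2 _ W' l y' unitary_idm hW' hl hs.
    by rewrite -e' (L3 _ l y unitary_idm).
  have hm' := minor_perm a y (fun z => hm z I) s.
  exists (a - gamma / 2 * fdist2 X (conjd U y')); split.
    exists a, (conjd U y'); split; first exact: L4.
    split => // Z hZ.
    case: (D1 hZ) => hlz [V [hV eZ]].
    set lz := lambda Z in hlz eZ *.
    apply: ERle_trans (hm' lz) => /=.
    apply: scale_le.
    have := L2 V U lz y' hV hU hlz hs.
    by rewrite /conjd -eZ.
  apply: scale_le.
  by rewrite [X in fdist2 X _]eX -/(conjd U l) (L3 _ l y' hU).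
Qed.

Lemma part2 : (exists x, f x <> PInf) ->
   forall rho : R, gamma < rho ->
   forall X U : mat N, hermitian X -> unitary U ->
     X = mmul (mmul U (diagm (lambda X))) (adj U) ->
     forall V : mat N,
       prox_mat (Qmat gamma F) rho X V <->
       exists p : vecR N,
         prox_vec (Qvec gamma f) rho (lambda X) p /\
         V = mmul (mmul U (diagm p)) (adj U).
Proof.
move=> [x0 hx0] rho hrho X U hX hU eX V.
set l := lambda X in eX *.
have QFc : forall W z, unitary W -> Qmat gamma F (conjd W z) = Qvec gamma f z.
  move=> W z hW; rewrite part1; last exact: L4.
  case: (D3 W z hW) => s ->; exact: Qvec_sym.
have dX : forall a, fdist2 (conjd U a) X = vdist2 a l.
  by move=> a; rewrite [Y in fdist2 _ Y]eX -/(conjd U l) (L3 U a l hU).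
have dZ : forall Z, hermitian Z -> vdist2 (lambda Z) l <= fdist2 Z X.
  move=> Z hZ; case: (D1 hZ) => hlz [W [hW eZ]].
  have := L2 W U (lambda Z) l hW hU hlz (proj1 (D1 hX)).
  by rewrite /conjd -eZ -eX.
split.
- move=> [hV pV].
  case: (D1 hV) => hq [W [hW eV]].
  set q := lambda V in hq eV *.
  set V' := conjd U q.
  have QV : Qmat gamma F V = Qvec gamma f q.
    by rewrite [in LHS]eV -/(conjd W q) (QFc W q hW).
  have le1 : ERle (ERdiv_add (Qmat gamma F V') rho (/ 2 * fdist2 V' X))
                  (ERdiv_add (Qmat gamma F V) rho (/ 2 * fdist2 V X)).
    rewrite QV /V' (QFc U q hU); apply: ERdiv_add_mono.
    rewrite dX; have := dZ V hV; rewrite -/q; lra.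
  have pV' : prox_mat (Qmat gamma F) rho X V'.
    split; first exact: L4.
    move=> u hu; exact: ERle_trans le1 (pV u hu).
  have eq : V = V'.
    apply: fdist2_eq0.
    apply: (@prox_unique (mat N) (@hermitian N) (@fdist2 N) gamma F gamma_pos
       (@fdist2_ge0 N) (fun z => f_nonneg (lambda z)) mid (@mid_herm) (@fdist2_mid)
       rho X V V' X (conjd (@idm N) x0) hrho hX (L4 _ _)) => //.
    by rewrite (FD3 _ x0 unitary_idm).
  exists q; split; last exact: eq.
  split => // u _.
  rewrite -(QFc U q hU) -(QFc U u hU) -dX -dX.
  exact: (proj2 pV' (conjd U u) (L4 U u)).
- move=> [p [[_ pp] ->]]; split; first exact: L4.
  move=> Z hZ.
  rewrite -/(conjd U p) (QFc U p hU) dX (part1 Z hZ).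
  apply: ERle_trans (pp (lambda Z) I) _.
  apply: ERdiv_add_mono; have := dZ Z hZ; lra.
Qed.
End Main.



End PartG.
Import PartG.
Local Open Scope R_scope.
Theorem proposition1 (N : nat) (f : vecR N -> ERbar) (gamma : R)
  (f_nonneg : forall x, ERle (Fin 0) (f x))
  (f_sym : forall (s : {perm 'I_N}) (x : vecR N), f (fun i => x (s i)) = f x)
  (gamma_pos : 0 < gamma) :
  let F : mat N -> ERbar := fun X => f (lambda X) in
  (forall X : mat N, hermitian X ->
      Qmat gamma F X = Qvec gamma f (lambda X)) /\
  ((exists x, f x <> PInf) ->
   forall rho : R, gamma < rho ->
   forall X U : mat N, hermitian X -> unitary U ->
     X = mmul (mmul U (diagm (lambda X))) (adj U) ->
     forall V : mat N,
       prox_mat (Qmat gamma F) rho X V <->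
       exists p : vecR N,
         prox_vec (Qvec gamma f) rho (lambda X) p /\
         V = mmul (mmul U (diagm p)) (adj U)).
Proof.
move=> F; split.
- move=> X hX; exact (@part1 N f gamma f_sym gamma_pos X hX).
- exact (@part2 N f gamma f_nonneg f_sym gamma_pos).
Qed.
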